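(* Let $r\in[2,+\infty)$ and $h_0>0$. Let $Z\in L^r_{\mathbb{R}^q}(\mathbb{P})$ with $\mathbb{E}Z=0$, $a\in\mathbb{R}^d$ and $A\in\mathcal{M}(d,q,\mathbb{R})$. Then for every $h\in(0,h_0)$, $$\mathbb{E}\big|a+\sqrt h\,AZ\big|^r\le|a|^r(1+c^{(1)}_rh)+c^{(2)}_{r,h_0}\,h\,\|A\|^r\,\mathbb{E}|Z|^r,$$ where $c^{(1)}_r=2^{(r-3)_+}\frac{(r-1)(r-2)}{2}$, $c^{(2)}_{r,h_0}=2^{(r-3)_+}(r-1)\big(1+\frac r2h_0^{\frac r2-1}\big)$ and $\|A\|$ is the operator norm of $A$.
   Context: $|\cdot|$ denotes the Euclidean norm and $(x)_+=\max(x,0)$. *)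

(* Defs.v *)
From HB Require Import structures.
From mathcomp Require Import all_boot all_order all_algebra.
From mathcomp Require Import all_classical all_reals all_analysis.
Set Implicit Arguments. Unset Strict Implicit. Unset Printing Implicit Defensive.
Import Order.TTheory GRing.Theory Num.Theory.
Local Open Scope ring_scope.
Local Open Scope classical_set_scope.

Definition eucl {R : realType} {n : nat} (v : 'cV[R]_n) : R :=
  Num.sqrt (\sum_(i < n) v i ord0 ^+ 2).

Definition opnorm {R : realType} {d q : nat} (A : 'M[R]_(d, q)) : R :=
  sup [set eucl (A *m x) | x in [set x : 'cV[R]_q | eucl x <= 1]].

Definition pos_part {R : realType} (x : R) : R := Num.max x 0.

Definition c1 {R : realType} (r : R) : R :=
  2 `^ pos_part (r - 3) * ((r - 1) * (r - 2) / 2).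

Definition c2 {R : realType} (r h0 : R) : R :=
  2 `^ pos_part (r - 3) * (r - 1) * (1 + r / 2 * h0 `^ (r / 2 - 1)).

(* Main.v *)
Require Import Defs.
From HB Require Import structures.
From mathcomp Require Import all_boot all_order all_algebra.
From mathcomp Require Import all_classical all_reals all_analysis.
From mathcomp Require Import measurable_realfun.
From mathcomp Require Import ring lra.
Import Order.TTheory GRing.Theory Num.Theory.
Local Open Scope ring_scope.
Local Open Scope classical_set_scope.

Section S.
Context {R : realType}.


Lemma is_derive_powR_comp (f : R -> R) (df x a : R) :
  is_derive x 1 f df -> 0 < f x ->
  is_derive x 1 (fun y => f y `^ a) (a * f x `^ (a - 1) * df).
Proof.
move=> hf fx0.
have d1 : derivable f x 1 := @ex_derive _ _ _ _ _ _ _ hf.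
have d2 : derivable (fun y : R => y `^ a) (f x) 1.
  by apply: (@derivable_powR R 1 a); rewrite in_itv/= fx0.
have dc : derivable ((fun y : R => y `^ a) \o f) x 1.
  apply/derivable1_diffP; apply: differentiable_comp; exact/derivable1_diffP.
apply: DeriveDef; first exact: dc.
rewrite -derive1E (derive1_comp d1 d2) powR_derive1 ?in_itv/= ?fx0//.
by rewrite derive1E derive_val.
Qed.

Lemma mono_derive (f df : R -> R) (a b : R) : a <= b ->
  (forall x, a <= x <= b -> is_derive x 1 f (df x)) ->
  (forall x, a <= x <= b -> 0 <= df x) -> f a <= f b.
Proof.
move=> ab hd hp.
have hd' : forall x, x \in `]a, b[%R -> is_derive x 1 f (df x).
  move=> x; rewrite in_itv/= => /andP[h1 h2]; apply: hd.
  by rewrite !ltW.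
have hdv : {in `[a, b]%R, forall x, derivable f x 1}.
  move=> x hx; have hx' : a <= x <= b by move: hx; rewrite in_itv.
  exact: (@ex_derive _ _ _ _ _ _ _ (hd x hx')).
have [c cab E] := @MVT_segment R f df a b ab hd'
  (@derivable_within_continuous R R f `[a, b]%R hdv).
rewrite -subr_ge0 E mulr_ge0 ?subr_ge0//; apply: hp.
by move: cab; rewrite in_itv.
Qed.

Lemma powsq (x y : R) : 0 <= x -> (x ^+ 2) `^ y = x `^ (2 * y).
Proof. by move=> x0; rewrite powRrM powR_mulrn. Qed.

Lemma powR_split (x m : R) : 0 <= x -> m + 2 != 0 -> x `^ (m + 2) = x `^ m * x ^+ 2.
Proof.
move=> x0 h; rewrite powRD; last by rewrite (negbTE h).
by rewrite powR_mulrn.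
Qed.

Lemma key (s v b r K : R) :
  0 <= s -> 0 <= v -> b ^+ 2 <= s ^+ 2 * v ^+ 2 -> 2 <= r -> 1 <= K ->
  (s + v) `^ (r - 2) <= K * (s `^ (r - 2) + v `^ (r - 2)) ->
  (s ^+ 2 + 2 * b + v ^+ 2) `^ (r / 2) <=
  s `^ r + r * b * s `^ (r - 2) + K * r * (r - 1) / 2 * (s `^ (r - 2) * v ^+ 2)
  + K * r * (r - 1) / 2 * v `^ r.
Proof.
move=> s0 v0 hb r2 K1 hK.
have svp := mulr_ge0 s0 v0.
have bsv : b <= s * v.
  case: (lerP b (s * v)) => // hbs.
  have h1 : 0 < b - s * v by lra.
  have h2 : 0 < b + s * v by lra.
  have := mulr_gt0 h1 h2; nra.
have bsv' : - (s * v) <= b.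
  case: (lerP (- (s * v)) b) => // hbs.
  have h1 : 0 < - b - s * v by lra.
  have h2 : 0 < - b + s * v by lra.
  have := mulr_gt0 h1 h2; nra.
pose Q t := s ^+ 2 + 2 * b * t + v ^+ 2 * t ^+ 2.
have Qid t : (b + v ^+ 2 * t) ^+ 2 <= v ^+ 2 * Q t.
  have E : v ^+ 2 * Q t - (b + v ^+ 2 * t) ^+ 2 = s ^+ 2 * v ^+ 2 - b ^+ 2.
    by rewrite /Q; ring.
  lra.
have Q0 t : 0 <= t <= 1 -> 0 <= Q t.
  move=> /andP[t0 t1].
  have E : Q t = (s - v * t) ^+ 2 + 2 * t * (b + s * v) by rewrite /Q; ring.
  rewrite E addr_ge0 ?sqr_ge0 // mulr_ge0 // ?mulr_ge0 //; lra.
have Qle t : 0 <= t <= 1 -> Q t <= (s + v) ^+ 2.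
  move=> /andP[t0 t1].
  have E : (s + v) ^+ 2 - Q t = 2 * (s * v - b * t) + v ^+ 2 * (1 - t ^+ 2).
    by rewrite /Q; ring.
  have h1 : b * t <= s * v.
    case: (lerP 0 b) => hb0.
      by apply: le_trans bsv; rewrite ler_piMr.
    by apply: le_trans svp; rewrite nmulr_rle0.
  have h2 : t ^+ 2 <= 1 by rewrite expr_le1.
  have : 0 <= v ^+ 2 * (1 - t ^+ 2) by rewrite mulr_ge0 ?sqr_ge0 // subr_ge0.
  lra.
have Q1 : Q 1 = s ^+ 2 + 2 * b + v ^+ 2 by rewrite /Q; ring.
have rE : r = (r - 2) + 2 by ring.
have r20 : (r - 2) + 2 != 0 by rewrite -rE; apply/negP => /eqP r0; lra.
have sr : s `^ r = s `^ (r - 2) * s ^+ 2 by rewrite {1}rE powR_split.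
have vr : v `^ r = v `^ (r - 2) * v ^+ 2 by rewrite {1}rE powR_split.
have sm0 : 0 <= s `^ (r - 2) by apply: powR_ge0.
have vm0 : 0 <= v `^ (r - 2) by apply: powR_ge0.
have C1 : 1 <= K * r * (r - 1) / 2.
  rewrite ler_pdivlMr //.
  have h : 2 <= r * (r - 1) by nra.
  have h' : 0 <= (K - 1) * (r * (r - 1)) by rewrite mulr_ge0 //; lra.
  have E : K * r * (r - 1) = (K - 1) * (r * (r - 1)) + r * (r - 1) by ring.
  rewrite E; lra.
rewrite -Q1.
have r2E : 2 * (r / 2) = r by rewrite mulrC divfK.
have hr2 : 0 <= r / 2 by lra.
have [hpos|hneg] := pselect (forall t, 0 <= t <= 1 -> 0 < Q t); last first.
  have [t0 [ht0 nQ]] : exists t0, 0 <= t0 <= 1 /\ ~ 0 < Q t0.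
    by move/existsNP: hneg => [t0 /not_implyP h]; exists t0.
  have Qt0 : Q t0 = 0.
    by apply/eqP; rewrite eq_le Q0 // andbT leNgt; apply/negP.
  have bt : b + v ^+ 2 * t0 = 0.
    apply/eqP; rewrite -sqrf_eq0 eq_le sqr_ge0 andbT.
    by have := Qid t0; rewrite Qt0 mulr0.
  have Q1v : Q 1 <= v ^+ 2.
    have E : Q 1 = Q t0 + 2 * (b + v ^+ 2 * t0) * (1 - t0) + v ^+ 2 * (1 - t0) ^+ 2.
      by rewrite /Q; ring.
    rewrite E Qt0 bt mulr0 mul0r !add0r.
    case/andP: ht0 => t00 t01.
    have : (1 - t0) ^+ 2 <= 1 by rewrite expr_le1 //; lra.
    have := sqr_ge0 v.
    nra.
  have L : Q 1 `^ (r / 2) <= v `^ r.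
    rewrite -[X in _ <= v `^ X]r2E -powsq //.
    have := @ge0_ler_powR R (r / 2) hr2 (Q 1) (v ^+ 2); apply => //.
      by rewrite nnegrE; apply: Q0; rewrite lexx ler01.
    by rewrite nnegrE sqr_ge0.
  apply: (le_trans L).
  have hA : 0 <= s `^ r + r * b * s `^ (r - 2) + K * r * (r - 1) / 2 * (s `^ (r - 2) * v ^+ 2).
    have E : s `^ r + r * b * s `^ (r - 2) + K * r * (r - 1) / 2 * (s `^ (r - 2) * v ^+ 2)
       = s `^ (r - 2) * (s ^+ 2 + r * b + K * r * (r - 1) / 2 * v ^+ 2).
      by rewrite sr; ring.
    rewrite E mulr_ge0 //.
    have E2 : s ^+ 2 - r * (s * v) + r * (r - 1) / 2 * v ^+ 2
       = (s - r * v / 2) ^+ 2 + r * (r - 2) / 4 * v ^+ 2.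
      by field.
    have h1 : 0 <= r * (r - 2) / 4 * v ^+ 2.
      by rewrite mulr_ge0 ?sqr_ge0 // divr_ge0 // mulr_ge0 //; lra.
    have h2 := sqr_ge0 (s - r * v / 2).
    have h3 : - (r * (s * v)) <= r * b.
      by rewrite -mulrN ler_wpM2l //; lra.
    have h4 : r * (r - 1) / 2 * v ^+ 2 <= K * r * (r - 1) / 2 * v ^+ 2.
      rewrite ler_wpM2r ?sqr_ge0 // ler_pM2r ?invr_gt0 ?ltr0n //.
      rewrite -mulrA ler_peMl //; first by rewrite mulr_ge0 //; lra.
    lra.
  have hB : v `^ r <= K * r * (r - 1) / 2 * v `^ r.
    by rewrite ler_peMl // powR_ge0.
  lra.
pose e := r / 2 - 1.
pose sm := s `^ (r - 2).
pose vm := v `^ (r - 2).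
have smE : (s ^+ 2) `^ e = sm.
  by rewrite powsq // /sm /e; congr (_ `^ _); field.
have he : 0 <= e by rewrite /e; lra.
have re : r - 1 = 2 * e + 1 by rewrite /e; field.
have dQ (t : R) : is_derive t 1 Q (2 * b + 2 * v ^+ 2 * t).
  rewrite /Q; apply: is_derive_eq; rewrite /GRing.scale/= ?mulr1; ring.
have dQe (t a : R) : 0 < Q t ->
    is_derive t 1 (fun t => Q t `^ a) (a * Q t `^ (a - 1) * (2 * b + 2 * v ^+ 2 * t)).
  by move=> qt; apply: is_derive_powR_comp.
pose H t := b * sm + (r - 1) * K * (sm + vm) * v ^+ 2 * t - Q t `^ e * (b + v ^+ 2 * t).
pose dH t := (r - 1) * K * (sm + vm) * v ^+ 2 -
  (e * Q t `^ (e - 1) * (2 * b + 2 * v ^+ 2 * t) * (b + v ^+ 2 * t) + Q t `^ e * v ^+ 2).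
have HD (t : R) : 0 <= t <= 1 -> is_derive t 1 H (dH t).
  move=> ht; have hd := dQe t e (hpos t ht).
  rewrite /H; apply: is_derive_eq.
  rewrite /dH /GRing.scale/= ?mulr1; ring.
have dH0 (t : R) : 0 <= t <= 1 -> 0 <= dH t.
  move=> ht; have qp := hpos t ht.
  have Qi := Qid t.
  have Ql := Qle t ht.
  rewrite /dH; move: qp Qi Ql; set q := Q t => qp Qi Ql.
  have qe : q `^ e = q `^ (e - 1) * q.
    have := @powRD R q (e - 1) 1; rewrite subrK powRr1 ?(ltW qp) //; apply.
    by rewrite (gt_eqF qp) implybT.
  have X0 : 0 <= q `^ (e - 1) by apply: powR_ge0.
  have T1 : e * q `^ (e - 1) * (2 * b + 2 * v ^+ 2 * t) * (b + v ^+ 2 * t)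
      <= 2 * e * v ^+ 2 * q `^ e.
    have E1 : e * q `^ (e - 1) * (2 * b + 2 * v ^+ 2 * t) * (b + v ^+ 2 * t)
        = (2 * e * q `^ (e - 1)) * (b + v ^+ 2 * t) ^+ 2 by ring.
    have E2 : 2 * e * v ^+ 2 * q `^ e = (2 * e * q `^ (e - 1)) * (v ^+ 2 * q).
      by rewrite qe; ring.
    rewrite E1 E2 ler_wpM2l //.
    by rewrite mulr_ge0 // mulr_ge0 //.
  have T2 : q `^ e <= K * (sm + vm).
    apply: le_trans hK.
    have -> : r - 2 = 2 * e by rewrite /e; field.
    rewrite -powsq; last by apply: addr_ge0.
    have := @ge0_ler_powR R e he q ((s + v) ^+ 2); apply => //.
      by rewrite nnegrE ltW.
    by rewrite nnegrE sqr_ge0.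
  have P : 0 <= (2 * e + 1) * (v ^+ 2 * (K * (sm + vm) - q `^ e)).
    by rewrite mulr_ge0 // ?mulr_ge0 ?sqr_ge0 // ?subr_ge0 //; lra.
  rewrite re; nra.
have Q0E : Q 0 = s ^+ 2 by rewrite /Q; ring.
have H0 : H 0 = 0 by rewrite /H Q0E smE; ring.
have Hge0 (t : R) : 0 <= t <= 1 -> 0 <= H t.
  move=> /andP[t0 t1]; rewrite -H0.
  apply: (@mono_derive H dH 0 t t0).
    move=> x /andP[x0 xt]; apply: HD; rewrite x0 /=; lra.
  move=> x /andP[x0 xt]; apply: dH0; rewrite x0 /=; lra.
pose G t := s `^ r + r * b * sm * t + K * r * (r - 1) / 2 * (sm + vm) * v ^+ 2 * t ^+ 2
  - Q t `^ (r / 2).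
have GD (t : R) : 0 <= t <= 1 -> is_derive t 1 G (r * H t).
  move=> ht; have hd := dQe t (r / 2) (hpos t ht).
  rewrite /G; apply: is_derive_eq.
  by rewrite /H /e /GRing.scale/= ?mulr1; field.
have G0 : G 0 = 0.
  by rewrite /G Q0E powsq // r2E; ring.
have G1 : 0 <= G 1.
  rewrite -G0; apply: (@mono_derive G (fun t => r * H t) 0 1 ler01).
  move=> x hx; rewrite mulr_ge0 //; [lra | exact: Hge0].
move: G1; rewrite /G vr /sm /vm; lra.
Qed.


Lemma half_convex (x y p : R) : 1 <= p -> 0 <= x -> 0 <= y ->
  (2^-1 * x + 2^-1 * y) `^ p <= 2^-1 * x `^ p + 2^-1 * y `^ p.
Proof.
move=> p1 x0 y0.
rewrite {2 4}(_ : 2^-1 = 1 - 2^-1); last by rewrite {2}(splitr 1) div1r addrK.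
by apply: (convex_powR p1 (Itv01 _ _)) => //=;
  rewrite ?inE/= ?in_itv/= ?x0 ?y0 ?invr_ge0// invf_le1 ?ler1n.
Qed.

Lemma ratio_pow (x t m : R) : 0 <= x -> 0 < t -> x <= t -> m <= 1 ->
  t `^ m * (x / t) <= x `^ m.
Proof.
move=> x0 t0 xt m1.
have -> : x `^ m = (t * (x / t)) `^ m by rewrite mulrC divfK // gt_eqF.
rewrite powRM; [|exact: ltW t0|exact: divr_ge0 x0 (ltW t0)]; apply: ler_wpM2l; first exact: powR_ge0.
have [->|xp] := eqVneq x 0; first by rewrite mul0r powR_ge0.
apply: ger1_powR => //; rewrite divr_gt0 ?ler_pdivrMr ?mul1r //.
by rewrite lt_neqAle eq_sym xp.
Qed.

Lemma kbound (s v r : R) : 0 <= s -> 0 <= v -> 2 <= r ->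
  (s + v) `^ (r - 2) <= 2 `^ (Num.max (r - 3) 0) * (s `^ (r - 2) + v `^ (r - 2)).
Proof.
move=> s0 v0 r2.
case: (lerP (r - 3) 0) => hr.
  rewrite powRr0 mul1r.
  have [st0|stp] := eqVneq (s + v) 0.
    have s00 : s = 0 by lra.
    have v00 : v = 0 by lra.
    by rewrite st0 s00 v00 lerDl powR_ge0.
  have tp : 0 < s + v by rewrite lt_neqAle eq_sym stp addr_ge0.
  have h1 := @ratio_pow s (s + v) (r - 2) s0 tp ltac:(lra) ltac:(lra).
  have h2 := @ratio_pow v (s + v) (r - 2) v0 tp ltac:(lra) ltac:(lra).
  have E : (s + v) `^ (r - 2) = (s + v) `^ (r - 2) * (s / (s + v)) + (s + v) `^ (r - 2) * (v / (s + v)).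
    by rewrite -mulrDr -mulrDl divff ?gt_eqF // mulr1.
  rewrite E; lra.
have m1 : 1 <= r - 2 by lra.
have := @half_convex s v (r - 2) m1 s0 v0.
rewrite -mulrDr powRM ?invr_ge0 ?addr_ge0 // -mulrDr => h.
have h2 : 0 < 2 `^ (r - 2) :> R by apply: powR_gt0.
have E : 2 `^ (r - 2) = 2 `^ (r - 3) * (2 : R).
  have -> : r - 2 = (r - 3) + 1 by ring.
  by rewrite powRD ?powRr1 // pnatr_eq0 implybT.
have E2 : (2 : R) `^ (r - 2) * (2 ^-1) `^ (r - 2) = 1.
  by rewrite -powRM ?invr_ge0 // divff ?pnatr_eq0 // powR1.
have := ler_wpM2l (ltW h2) h.
rewrite mulrA E2 mul1r => /le_trans; apply.
rewrite E -mulrA; apply: ler_wpM2l; first exact: powR_ge0.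
by rewrite mulrA divff ?pnatr_eq0 // mul1r.
Qed.

Lemma K_ge1 (r : R) : 1 <= 2 `^ (Num.max (r - 3) 0).
Proof.
have h : 0 <= Num.max (r - 3) 0 by rewrite le_max lexx orbT.
have := @ge0_ler_powR R _ h 1 2; rewrite powR1; apply => //; rewrite ?nnegrE //.
by rewrite ler1n.
Qed.


Definition sq {n} (x : 'cV[R]_n) : R := \sum_(i < n) x i ord0 ^+ 2.
Definition dot {n} (x y : 'cV[R]_n) : R := \sum_(i < n) x i ord0 * y i ord0.

Lemma sq_ge0 {n} (x : 'cV[R]_n) : 0 <= sq x.
Proof. by apply: sumr_ge0 => i _; apply: sqr_ge0. Qed.

Lemma euclE {n} (x : 'cV[R]_n) : eucl x = Num.sqrt (sq x).
Proof. by []. Qed.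

Lemma eucl_ge0 {n} (x : 'cV[R]_n) : 0 <= eucl x.
Proof. exact: sqrtr_ge0. Qed.

Lemma eucl_sqr {n} (x : 'cV[R]_n) : eucl x ^+ 2 = sq x.
Proof. by rewrite euclE sqr_sqrtr // sq_ge0. Qed.

Lemma euclr {n} (x : 'cV[R]_n) (r : R) : eucl x `^ r = sq x `^ (r / 2).
Proof.
by rewrite euclE -powR12_sqrt ?sq_ge0 // -powRrM mulrC.
Qed.

Lemma sqD {n} (x y : 'cV[R]_n) (t : R) :
  sq (x + t *: y) = sq x + 2 * t * dot x y + t ^+ 2 * sq y.
Proof.
rewrite /sq /dot !mulr_sumr -!big_split /=.
by apply: eq_bigr => i _; rewrite !mxE; ring.
Qed.

Lemma sqZ {n} (x : 'cV[R]_n) (t : R) : sq (t *: x) = t ^+ 2 * sq x.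
Proof.
rewrite /sq mulr_sumr; apply: eq_bigr => i _; rewrite !mxE; ring.
Qed.

Lemma sq0_eq {n} (x : 'cV[R]_n) : sq x = 0 -> x = 0.
Proof.
move=> h; apply/matrixP => i j; rewrite (ord1 j) mxE.
have /psumr_eq0P H : \sum_(k < n) x k ord0 ^+ 2 = 0 by [].
by apply/eqP; rewrite -sqrf_eq0; apply/eqP; apply: H => // k _; apply: sqr_ge0.
Qed.

Lemma CS {n} (x y : 'cV[R]_n) : dot x y ^+ 2 <= sq x * sq y.
Proof.
have [/sq0_eq ->|Sn0] := eqVneq (sq y) 0.
  have d0 : dot x 0 = 0 by rewrite /dot big1 // => i _; rewrite mxE mulr0.
  have s0 : sq (0 : 'cV[R]_n) = 0 by rewrite /sq big1 // => i _; rewrite mxE expr0n.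
  by rewrite d0 s0 expr0n mulr0.
have Sp : 0 < sq y by rewrite lt_neqAle eq_sym Sn0 sq_ge0.
have := @sq_ge0 n (x + (- (dot x y / sq y)) *: y); rewrite sqD => h.
have E : sq y * (sq x + 2 * - (dot x y / sq y) * dot x y + (- (dot x y / sq y)) ^+ 2 * sq y)
  = sq y * sq x - dot x y ^+ 2 by field.
have := mulr_ge0 (ltW Sp) h; rewrite E; lra.
Qed.

Lemma coord_le {n} (x : 'cV[R]_n) i : `|x i ord0| <= eucl x.
Proof.
rewrite euclE -(sqrtr_sqr (x i ord0)); apply: ler_wsqrtr.
rewrite /sq (bigD1 i) //= lerDl; apply: sumr_ge0 => j _; apply: sqr_ge0.
Qed.

Lemma euclZ {n} (x : 'cV[R]_n) (t : R) : eucl (t *: x) = `|t| * eucl x.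
Proof. by rewrite !euclE sqZ sqrtrM ?sqr_ge0 // sqrtr_sqr. Qed.

Lemma eucl0 n : eucl (0 : 'cV[R]_n) = 0.
Proof.
rewrite euclE (_ : sq _ = 0) ?sqrtr0 //.
by rewrite /sq big1 // => i _; rewrite mxE expr0n.
Qed.

Lemma eucl_bound {n} (y : 'cV[R]_n) (B : 'I_n -> R) :
  (forall i, `|y i ord0| <= B i) -> eucl y <= Num.sqrt (\sum_i B i ^+ 2).
Proof.
move=> hB; rewrite euclE; apply: ler_wsqrtr; apply: ler_sum => i _.
rewrite -real_normK ?num_real // -[B i ^+ 2](@ger0_norm _ (B i ^+ 2)) ?sqr_ge0 //.
rewrite normrX; apply: lerXn2r; rewrite ?nnegrE //.
by rewrite (ger0_norm (le_trans (normr_ge0 _) (hB i))).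
Qed.

Definition opset {d q} (A : 'M[R]_(d, q)) :=
  [set eucl (A *m x) | x in [set x : 'cV[R]_q | eucl x <= 1]].

Lemma opset_sup {d q} (A : 'M[R]_(d, q)) : has_sup (opset A).
Proof.
split.
  exists (eucl (A *m 0)); exists 0 => //=; rewrite eucl0; exact: ler01.
exists (Num.sqrt (\sum_(i < d) (\sum_(j < q) `|A i j|) ^+ 2)).
move=> _ [x /= hx <-]; apply: eucl_bound => i.
rewrite mxE (le_trans (ler_norm_sum _ _ _)) //; apply: ler_sum => j _.
rewrite normrM; rewrite -[leRHS]mulr1; apply: ler_wpM2l => //.
exact: le_trans (coord_le x j) hx.
Qed.

Lemma opnorm_ge0 {d q} (A : 'M[R]_(d, q)) : 0 <= opnorm A.
Proof.
apply: le_trans (sup_upper_bound (opset_sup A) _).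
  exact: (eucl_ge0 (A *m 0)).
by exists 0 => //=; rewrite eucl0; exact: ler01.
Qed.

Lemma opnorm_le {d q} (A : 'M[R]_(d, q)) x : eucl (A *m x) <= opnorm A * eucl x.
Proof.
have [e0|en0] := eqVneq (eucl x) 0.
  have : sq x = 0 by rewrite -(eucl_sqr x); apply/eqP; rewrite sqrf_eq0; apply/eqP.
  by move/sq0_eq ->; rewrite mulmx0 !eucl0 mulr0.
have ep : 0 < eucl x by rewrite lt_neqAle eq_sym en0 eucl_ge0.
have h : eucl (A *m ((eucl x)^-1 *: x)) <= opnorm A.
  apply: (sup_upper_bound (opset_sup A)); exists ((eucl x)^-1 *: x) => //=.
  by rewrite euclZ ger0_norm ?invr_ge0 ?eucl_ge0 // mulVf.
move: h; rewrite -scalemxAr euclZ ger0_norm ?invr_ge0 ?eucl_ge0 //.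
by rewrite mulrC -ler_pdivlMr ?invr_gt0 // invrK.
Qed.



End S.

Section S.
Variable R : realType.

Lemma young (s w r : R) : 0 <= s -> 0 <= w -> 2 <= r ->
  s `^ (r - 2) * w ^+ 2 <= (r - 2) / r * s `^ r + 2 / r * w `^ r.
Proof.
move=> s0 w0 r2.
have [r2e|r2n] := eqVneq r 2.
  rewrite r2e subrr powRr0 mul1r !mul0r add0r divff ?pnatr_eq0 // mul1r.
  by rewrite powR_mulrn.
have r2l : 2 < r by rewrite lt_neqAle eq_sym r2n.
have rm0 : r - 2 != 0 by apply/negP => /eqP h; lra.
have r0 : r != 0 by apply/negP => /eqP h; lra.
have := @conjugate_powR R (s `^ (r - 2)) (w ^+ 2) (r / (r - 2)) (r / 2)
  (powR_ge0 _ _) (sqr_ge0 _) _ _ _.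
rewrite -powRrM powsq // => h.
have E1 : (r - 2) * (r / (r - 2)) = r by field.
have E2 : 2 * (r / 2) = r by field.
rewrite E1 E2 in h.
have E3 : s `^ r / (r / (r - 2)) = (r - 2) / r * s `^ r by field; rewrite r0 rm0.
have E4 : w `^ r / (r / 2) = 2 / r * w `^ r by field; rewrite r0.
rewrite -E3 -E4; apply: h.
- by rewrite divr_gt0 //; lra.
- by rewrite divr_gt0 //; lra.
- by field; rewrite r0 rm0.
Qed.

Lemma pointwise (d q : nat) (r h0 h : R) (a : 'cV[R]_d) (A : 'M[R]_(d, q))
    (z : 'cV[R]_q) : 2 <= r -> 0 < h -> h < h0 ->
  eucl (a + Num.sqrt h *: (A *m z)) `^ r <=
  eucl a `^ r * (1 + c1 r * h) + r * eucl a `^ (r - 2) * dot a (Num.sqrt h *: (A *m z))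
  + c2 r h0 * h * opnorm A `^ r * eucl z `^ r.
Proof.
move=> r2 hp hh0.
have rp : 0 < r by lra.
have r1 : 0 <= r - 1 by lra.
have he : 0 <= r / 2 - 1 by lra.
have r2p : 0 < r / 2 by lra.
have r0 : r != 0 by rewrite gt_eqF.
set u := Num.sqrt h *: (A *m z).
set s := eucl a. set v := eucl u. set b := dot a u.
set K := 2 `^ pos_part (r - 3).
set w := eucl (A *m z).
set N := opnorm A.
have s0 : 0 <= s := eucl_ge0 a.
have v0 : 0 <= v := eucl_ge0 u.
have w0 : 0 <= w := eucl_ge0 (A *m z).
have N0 : 0 <= N := opnorm_ge0 A.
have K1 : 1 <= K := K_ge1 r.
have hb : b ^+ 2 <= s ^+ 2 * v ^+ 2 by rewrite !eucl_sqr; exact: CS.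
have hk := @key _ s v b r K s0 v0 hb r2 K1 (@kbound _ s v r s0 v0 r2).
have LE : eucl (a + u) `^ r = (s ^+ 2 + 2 * b + v ^+ 2) `^ (r / 2).
  rewrite euclr; congr (_ `^ _).
  have := sqD a u 1; rewrite scale1r => ->; rewrite !eucl_sqr /b; ring.
rewrite LE; apply: (le_trans hk).
have sqh : Num.sqrt h `^ r = h `^ (r / 2).
  by rewrite -powR12_sqrt ?ltW // -powRrM mulrC.
have vE : v = Num.sqrt h * w by rewrite /v /u euclZ ger0_norm ?sqrtr_ge0.
have v2 : v ^+ 2 = h * w ^+ 2 by rewrite vE exprMn sqr_sqrtr // ltW.
have hr : h `^ (r / 2) = h * h `^ (r / 2 - 1).
  by rewrite mulr_powRB1 ?ltW.
have vr : v `^ r = h * h `^ (r / 2 - 1) * w `^ r.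
  by rewrite vE powRM ?sqrtr_ge0 // sqh hr.
have H1 : h `^ (r / 2 - 1) <= h0 `^ (r / 2 - 1).
  have := @ge0_ler_powR R _ he h h0; apply; rewrite ?nnegrE ?ltW //.
  exact: (lt_trans hp).
have W0 : 0 <= w `^ r := powR_ge0 _ _.
have T3 : w `^ r <= N `^ r * eucl z `^ r.
  rewrite -powRM ?eucl_ge0 //.
  have := @ge0_ler_powR R r (ltW rp) w (N * eucl z); apply; rewrite ?nnegrE //.
    by rewrite mulr_ge0 // eucl_ge0.
  exact: opnorm_le.
have Y := @young s w r s0 w0 r2.
have C0 : 0 <= K * r * (r - 1) / 2.
  by rewrite divr_ge0 // mulr_ge0 // ?mulr_ge0 // ?(ltW rp) // (le_trans _ K1).
have T1 : K * r * (r - 1) / 2 * (s `^ (r - 2) * v ^+ 2)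
    <= K * r * (r - 1) / 2 * h * ((r - 2) / r * s `^ r + 2 / r * w `^ r).
  rewrite v2 (_ : s `^ (r - 2) * (h * w ^+ 2) = h * (s `^ (r - 2) * w ^+ 2)); last by ring.
  rewrite mulrA; apply: ler_wpM2l => //; rewrite mulr_ge0 // ltW //.
have T2 : K * r * (r - 1) / 2 * v `^ r
    <= K * r * (r - 1) / 2 * h * h0 `^ (r / 2 - 1) * w `^ r.
  rewrite vr !mulrA; apply: ler_wpM2r => //; apply: ler_wpM2l => //.
  by rewrite mulr_ge0 // ltW.
have c2E : c2 r h0 = K * (r - 1) * (1 + r / 2 * h0 `^ (r / 2 - 1)) by [].
have c1E : c1 r = K * ((r - 1) * (r - 2) / 2) by [].
have c20 : 0 <= c2 r h0 * h.
  rewrite c2E mulr_ge0 ?(ltW hp) // mulr_ge0 // ?mulr_ge0 //.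
    exact: le_trans K1.
  by rewrite addr_ge0 // mulr_ge0 ?powR_ge0 // ltW.
have T4 : c2 r h0 * h * w `^ r <= c2 r h0 * h * (N `^ r * eucl z `^ r).
  exact: ler_wpM2l.
have E : K * r * (r - 1) / 2 * h * ((r - 2) / r * s `^ r + 2 / r * w `^ r)
    + K * r * (r - 1) / 2 * h * h0 `^ (r / 2 - 1) * w `^ r
    = s `^ r * (c1 r * h) + c2 r h0 * h * w `^ r.
  by rewrite c1E c2E; field.
have F1 : s `^ r + r * b * s `^ (r - 2) + K * r * (r - 1) / 2 * (s `^ (r - 2) * v ^+ 2)
    + K * r * (r - 1) / 2 * v `^ r <=
    s `^ r + r * b * s `^ (r - 2) + (s `^ r * (c1 r * h) + c2 r h0 * h * w `^ r).
  by rewrite -E -addrA; apply: lerD => //; exact: lerD T1 T2.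
apply: (le_trans F1).
have E2 : s `^ r * (1 + c1 r * h) + r * s `^ (r - 2) * b + c2 r h0 * h * N `^ r * eucl z `^ r
    = (s `^ r + r * b * s `^ (r - 2) + s `^ r * (c1 r * h))
      + c2 r h0 * h * (N `^ r * eucl z `^ r) by ring.
by rewrite E2 addrA; apply: lerD.
Qed.

End S.

Theorem lemma1 (R : realType) (dT : measure_display) (T : measurableType dT)
  (P : probability T R) (d q : nat) (r h0 : R)
  (Z : T -> 'cV[R]_q) (a : 'cV[R]_d) (A : 'M[R]_(d, q)) :
  2 <= r -> 0 < h0 ->
  (forall i : 'I_q, measurable_fun setT (fun w => Z w i ord0)) ->
  (\int[P]_w ((eucl (Z w)) `^ r)%:E < +oo)%E ->
  (forall i : 'I_q, (\int[P]_w (Z w i ord0)%:E = 0)%E) ->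
  forall h : R, 0 < h -> h < h0 ->
  (\int[P]_w ((eucl (a + Num.sqrt h *: (A *m Z w))) `^ r)%:E
   <= ((eucl a) `^ r * (1 + c1 r * h))%:E
      + (c2 r h0 * h * (opnorm A) `^ r)%:E * \int[P]_w ((eucl (Z w)) `^ r)%:E)%E.
Proof.
move=> r2 h00 mZ IZ EZ h hp hh0.
have rp : 0 < r by lra.
set k := Num.sqrt h.
pose beta w := dot a (k *: (A *m Z w)).
set k0 := eucl a `^ r * (1 + c1 r * h).
set k2 := c2 r h0 * h * opnorm A `^ r.
pose k1 := r * eucl a `^ (r - 2).
pose Zr w := eucl (Z w) `^ r.
have PW w : eucl (a + k *: (A *m Z w)) `^ r <= k0 + k1 * beta w + k2 * Zr w.
  exact: pointwise.
have mlin (c : 'I_q -> R) : measurable_fun setT (fun w => \sum_j c j * Z w j ord0).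
  apply: measurable_sum => j; apply: measurable_funM => //; exact: measurable_cst.
have msq n (X : T -> 'cV[R]_n) : (forall i, measurable_fun setT (fun w => X w i ord0)) ->
    measurable_fun setT (fun w => eucl (X w) `^ r).
  move=> mX.
  have -> : (fun w => eucl (X w) `^ r) = (fun x => x `^ (r / 2)) \o (fun w => sq (X w)).
    by apply/funext => w; rewrite /= euclr.
  apply: measurableT_comp; first exact: measurable_powR.
  by apply: measurable_sum => i; apply: measurable_funX.
have mZr : measurable_fun setT Zr by apply: msq.
have mf : measurable_fun setT (fun w => eucl (a + k *: (A *m Z w)) `^ r).
  apply: msq => i.
  have -> : (fun w => (a + k *: (A *m Z w)) i ord0)
      = (fun w => a i ord0 + k * \sum_j A i j * Z w j ord0).
    by apply/funext => w; rewrite !mxE.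
  apply: measurable_funD; first exact: measurable_cst.
  by apply: measurable_funM; [exact: measurable_cst | exact: mlin].
pose cb j := \sum_i a i ord0 * (k * A i j).
have betaE w : beta w = \sum_j cb j * Z w j ord0.
  rewrite /beta /dot.
  rewrite (eq_bigr (fun i => \sum_j a i ord0 * (k * A i j) * Z w j ord0)); last first.
    move=> i _; rewrite !mxE !mulr_sumr; apply: eq_bigr => j _; ring.
  rewrite exchange_big /=; apply: eq_bigr => j _; rewrite mulr_suml //.
have mT : measurable (setT : set T) by [].
have iZr : P.-integrable setT (fun w => (Zr w)%:E).
  apply/integrableP; split; first exact/measurable_EFinP.
  under eq_integral do rewrite gee0_abs ?lee_fin ?powR_ge0 //.
  exact: IZ.
have i1Zr := integrableD mT (finite_measure_integrable_cst P 1 mT) iZr.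
have iZ j : P.-integrable setT (fun w => (Z w j ord0)%:E).
  apply: (le_integrable mT _ _ i1Zr); first exact/measurable_EFinP.
  move=> w _ /=; rewrite lee_fin.
  have hZ : 0 <= Zr w by apply: powR_ge0.
  rewrite (ger0_norm (addr_ge0 ler01 hZ)).
  apply: le_trans (coord_le (Z w) j) _.
  case: (lerP (eucl (Z w)) 1) => h1.
    by apply: le_trans h1 _; rewrite lerDl.
  apply: le_trans (le1r_powR (ltW h1) (_ : 1 <= r)) _; first lra.
  by rewrite lerDr.
have ibeta : P.-integrable setT (fun w => (beta w)%:E).
  have -> : (fun w => (beta w)%:E) = (fun w => \sum_(j < q) (cb j)%:E * (Z w j ord0)%:E)%E.
    by apply/funext => w; rewrite betaE -sumEFin; apply: eq_bigr => j _; rewrite EFinM.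
  apply: integrable_sum => //= j _; exact: integrableZl.
have Ibeta : (\int[P]_w (beta w)%:E = 0)%E.
  have -> : (fun w => (beta w)%:E) = (fun w => \sum_(j < q) (cb j)%:E * (Z w j ord0)%:E)%E.
    by apply/funext => w; rewrite betaE -sumEFin; apply: eq_bigr => j _; rewrite EFinM.
  rewrite integral_sum //; last by move=> j; exact: integrableZl.
  by rewrite big1 // => j _; rewrite integralZl // EZ mule0.
have mbeta : measurable_fun setT beta.
  have -> : beta = (fun w => \sum_j cb j * Z w j ord0) by apply/funext => w; exact: betaE.
  exact: mlin.
pose g w := (k0 + k1 * beta w + k2 * Zr w)%:E.
have mg : measurable_fun setT g.
  apply/measurable_EFinP; apply: measurable_funD.
    apply: measurable_funD; first exact: measurable_cst.
    by apply: measurable_funM => //; exact: measurable_cst.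
  by apply: measurable_funM => //; exact: measurable_cst.
apply: (@le_trans _ _ (\int[P]_w g w)%E).
  apply: ge0_le_integral => //.
  - by move=> w _; rewrite lee_fin powR_ge0.
  - exact/measurable_EFinP.
  - by move=> w _; rewrite lee_fin; exact: PW.
have geq : g = (fun w => (k0%:E + k1%:E * (beta w)%:E) + k2%:E * (Zr w)%:E)%E.
  by apply/funext => w; rewrite /g !EFinD !EFinM.
have ic := finite_measure_integrable_cst P k0 mT.
have i1 : P.-integrable setT (fun w => (k0%:E + k1%:E * (beta w)%:E)%E).
  exact: (integrableD mT ic (integrableZl mT k1 ibeta)).
rewrite geq integralD //; last exact: integrableZl.
rewrite integralD //; last exact: integrableZl.
rewrite !integralZl // Ibeta mule0 adde0.
rewrite (_ : (\int[P]_w k0%:E)%E = k0%:E); last first.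
  by rewrite integral_cst // -[RHS]mule1; congr (_ * _)%E; exact: probability_setT.
by [].
Qed.
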